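(* Let $Q_1,Q_2\in\mathscr{Q}$ and $\delta>0$ with $\delta\le\min\{Q_1(1),Q_2(1)\}\le\max\{Q_1(1),Q_2(1)\}\le\sqrt{1-\delta^2}$. Let $W_1,W_2$ be the vorticity profiles associated with $Q_1,Q_2$. Then there is $C>0$ depending only on $\delta$ such that $\sup_{r>0}(1+r^4)|W_1(r)-W_2(r)|\le C\|Q_1-Q_2\|_{L^\infty(\mathbb{R}_+)}$ and $\sup_{r>0}(1+r^5)|W_1'(r)-W_2'(r)|\le C\,\mathcal{N}(Q_1-Q_2)+C\bigl(1+\mathcal{N}(Q_2)\bigr)\|Q_1-Q_2\|_{L^\infty(\mathbb{R}_+)}$.
   Context: Class $\mathscr{Q}$: all $\mathcal{C}^1$ functions $Q:(0,\infty)\to(0,1]$ with $Q'>0$ on $(0,\infty)$, $Q(r)\to0$ and $rQ'(r)\to0$ as $r\to0$, and $rQ'(r)\to0$ as $r\to\infty$. For a $\mathcal{C}^1$ function $F$ on $(0,\infty)$, $\mathcal{N}(F)=\sup_{r>0}r|F'(r)|$. The vorticity profile associated with $Q\in\mathscr{Q}$: $J=Q^{-2}-1$, $\Omega(r)=\exp\bigl(-\int_0^r\frac{4}{s+\sqrt{s^2+4J(s)}}ds\bigr)$, $W(r)=\Omega(r)\bigl(2-\frac{4r}{r+\sqrt{r^2+4J(r)}}\bigr)$. *)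

(* Defs.v *)
From Stdlib Require Import Reals Lra ClassicalEpsilon.
Open Scope R_scope.

Definition deriv (f : R -> R) (x : R) : R :=
  epsilon (inhabits 0) (fun l => derivable_pt_lim f x l).

Definition integral (f : R -> R) (a b : R) : R :=
  epsilon (inhabits 0)
    (fun I => exists pr : Riemann_integrable f a b, RiemannInt pr = I).

Definition classQ (Q : R -> R) : Prop :=
  exists Q' : R -> R,
    (forall r, 0 < r -> derivable_pt_lim Q r (Q' r)) /\
    (forall r, 0 < r -> continuity_pt Q' r) /\
    (forall r, 0 < r -> 0 < Q r <= 1) /\
    (forall r, 0 < r -> 0 < Q' r) /\
    (forall eps, 0 < eps -> exists d, 0 < d /\
        forall r, 0 < r < d -> Rabs (Q r) < eps /\ Rabs (r * Q' r) < eps) /\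
    (forall eps, 0 < eps -> exists M, 0 < M /\
        forall r, M < r -> Rabs (r * Q' r) < eps).

Definition Jf (Q : R -> R) (r : R) : R := / (Q r ^ 2) - 1.

(* integrand of Omega on (0,r]; its value at s <= 0 is irrelevant (set to 0,
   which is also its limit at 0+) *)
Definition omega_integrand (Q : R -> R) (s : R) : R :=
  if Rle_dec s 0 then 0 else 4 / (s + sqrt (s ^ 2 + 4 * Jf Q s)).

Definition Omega (Q : R -> R) (r : R) : R :=
  exp (- integral (omega_integrand Q) 0 r).

Definition Wf (Q : R -> R) (r : R) : R :=
  Omega Q r * (2 - 4 * r / (r + sqrt (r ^ 2 + 4 * Jf Q r))).

Definition sup_pos (g : R -> R) (s : R) : Prop :=
  is_lub (fun y => exists r, 0 < r /\ y = g r) s.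

(* Main.v *)
Require Import Defs.
From Stdlib Require Import Reals Lra Psatz ClassicalEpsilon.
From Coquelicot Require Import Coquelicot.
Open Scope R_scope.

Definition Tq r q := sqrt (r^2*q^2 + 4 - 4*q^2).
Definition gq r q := 4*q/(Tq r q + r*q).
Definition kq r q := 16/(Tq r q * (Tq r q + r*q)^2).
Definition hq r q := 32*q*(1-q^2)/(Tq r q + r*q)^3
   + 16*q*(1-q^2)/(Tq r q*(Tq r q + r*q)^2).

Lemma Tq_sq r q : 0 <= q <= 1 -> Tq r q ^ 2 = r^2*q^2 + 4 - 4*q^2.
Proof. intros. unfold Tq. rewrite pow2_sqrt; nra. Qed.

Lemma Tq_nonneg r q : 0 <= Tq r q.
Proof. apply sqrt_pos. Qed.

Lemma Tq_ge_rq r q : 0 <= r -> 0 <= q <= 1 -> r*q <= Tq r q.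
Proof. intros. pose proof (Tq_sq r q H0). pose proof (Tq_nonneg r q). nra. Qed.

Lemma Tq_le r q : 0 <= r -> 0 <= q <= 1 -> Tq r q <= 2 + r*q.
Proof. intros. pose proof (Tq_sq r q H0). pose proof (Tq_nonneg r q).
  destruct (Rle_dec (Tq r q) (2 + r*q)); auto.
  assert (0 <= r*q) by nra. nra. Qed.

Lemma Tq_ge_1mq r q : 0 <= q <= 1 -> 4*(1-q^2) <= Tq r q ^ 2.
Proof. intros. rewrite Tq_sq; nra. Qed.

Lemma Tq_pos r q : 0 < r -> 0 < q <= 1 -> 0 < Tq r q.
Proof. intros. pose proof (Tq_ge_rq r q). nra. Qed.

Lemma oi_eq Q r : 0 < r -> 0 < Q r <= 1 -> omega_integrand Q r = gq r (Q r).
Proof.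
  intros Hr Hq. unfold omega_integrand. destruct (Rle_dec r 0); [lra|].
  unfold Jf, gq. set (q := Q r) in *.
  pose proof (Tq_pos r q Hr Hq) as HT.
  assert (Hinv : / q^2 * q^2 = 1) by (field; lra).
  assert (Hs : sqrt (r ^ 2 + 4 * (/ q ^ 2 - 1)) = Tq r q / q).
  { apply sqrt_lem_1.
    - assert (0 < q^2) by nra. nra.
    - apply Rlt_le, Rdiv_lt_0_compat; lra.
    - pose proof (Tq_sq r q ltac:(lra)). replace (Tq r q / q * (Tq r q / q)) with (Tq r q ^2 / q^2) by (field; lra).
      rewrite H. field. lra. }
  rewrite Hs. field. assert (0 < r*q) by nra. split; lra.
Qed.

Lemma deriv_eq f x l : derivable_pt_lim f x l -> deriv f x = l.
Proof.
  intros H. unfold deriv.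
  assert (E : exists l0, derivable_pt_lim f x l0) by (exists l; exact H).
  pose proof (epsilon_spec (inhabits 0) _ E) as H1.
  eapply uniqueness_limite; eauto.
Qed.

Lemma Q_incr Q : classQ Q -> forall a b, 0 < a -> a < b -> Q a < Q b.
Proof.
  intros (Q' & HD & HC & Hpos & HQ'pos & H0 & Hinf) a b Ha Hab.
  destruct (MVT_cor2 Q Q' a b Hab) as (c & Hc & Hc2).
  - intros c Hc. apply HD. lra.
  - assert (0 < Q' c) by (apply HQ'pos; lra). nra.
Qed.

Lemma Q_le Q : classQ Q -> forall a b, 0 < a -> a <= b -> Q a <= Q b.
Proof.
  intros HQ a b Ha Hab. destruct (Req_dec a b). subst; lra.
  apply Rlt_le, Q_incr; auto; lra.
Qed.

Lemma Q_bounds Q : classQ Q -> forall r, 0 < r -> 0 < Q r <= 1.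
Proof. intros (Q' & HD & HC & Hpos & _). auto. Qed.

Lemma locally_pos x : 0 < x -> locally x (fun u => 0 < u).
Proof. intros. apply (open_gt 0). exact H. Qed.

Lemma oi_cont Q : classQ Q -> forall x, continuous (omega_integrand Q) x.
Proof.
  intros HQ x. pose proof HQ as (Q' & HD & HC & Hpos & HQ'pos & H0 & Hinf).
  destruct (Rlt_or_le x 0) as [Hx|Hx].
  - apply continuous_ext_loc with (fun _ => 0).
    + apply filter_imp with (fun u => u < 0). intros u Hu.
      unfold omega_integrand. destruct (Rle_dec u 0); auto; lra.
      apply (open_lt 0). exact Hx.
    + apply continuous_const.
  - destruct (Rle_lt_or_eq_dec 0 x Hx) as [Hx'|Hx'].
    + apply continuous_ext_loc with
        (fun u => 4 / (u + sqrt (u ^ 2 + 4 * (/ (Q u ^ 2) - 1)))).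
      * apply filter_imp with (fun u => 0 < u). intros u Hu.
        unfold omega_integrand, Jf. destruct (Rle_dec u 0); auto; lra.
        now apply locally_pos.
      * apply (@ex_derive_continuous R_AbsRing R_NormedModule).
        destruct (Hpos x Hx') as [Hq1 Hq2].
        assert (Hinv : / Q x ^ 2 * Q x ^ 2 = 1) by (field; lra).
        assert (0 < Q x ^2) by nra.
        auto_derive.
        replace (Q x * (Q x * 1)) with (Q x ^ 2) by ring.
        assert (Hq2' : Q x ^ 2 <= 1) by nra.
        assert (1 <= / Q x ^ 2) by nra.
        split. exists (Q' x); apply is_derive_Reals; auto.
        split. lra.
        split. nra.
        split; auto. pose proof (sqrt_pos (x * (x * 1) + 4 * (/ Q x ^ 2 + - (1)))). lra.
    + subst x. apply continuity_pt_filterlim.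
      intros eps Heps.
      destruct (H0 (Rmin (eps/8) (1/2))) as (d & Hd & Hd2).
      { apply Rmin_pos; lra. }
      exists d. split; auto. intros y [_ Hy]. simpl in Hy. unfold R_dist in *.
      unfold omega_integrand at 2. destruct (Rle_dec 0 0); [|lra].
      destruct (Rle_dec y 0) as [Hy0|Hy0].
      * unfold omega_integrand. destruct (Rle_dec y 0); [|lra].
        simpl. unfold R_dist. rewrite Rminus_0_r, Rabs_R0. lra.
      * assert (Hy' : 0 < y) by lra.
        simpl; unfold R_dist. rewrite Rminus_0_r in Hy. rewrite Rabs_pos_eq in Hy by lra.
        destruct (Hd2 y ltac:(lra)) as [HQy _].
        pose proof (Hpos y Hy') as Hqy.
        rewrite Rabs_pos_eq in HQy by lra.
        assert (Q y < eps/8) by (eapply Rlt_le_trans; [exact HQy| apply Rmin_l]).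
        assert (Q y < 1/2) by (eapply Rlt_le_trans; [exact HQy| apply Rmin_r]).
        rewrite Rminus_0_r, oi_eq by auto.
        unfold gq. set (q := Q y) in *.
        pose proof (Tq_ge_1mq y q ltac:(lra)).
        pose proof (Tq_nonneg y q).
        assert (1 <= Tq y q) by nra.
        assert (0 <= y * q) by nra.
        rewrite Rabs_pos_eq.
        -- apply Rle_lt_trans with (4*q); [|lra].
           apply Rmult_le_reg_r with (Tq y q + y * q); [lra|].
           unfold Rdiv. rewrite Rmult_assoc, Rinv_l by lra. nra.
        -- apply Rlt_le, Rdiv_lt_0_compat; lra.
Qed.

Definition Gf Q x := RInt (omega_integrand Q) 0 x.

Lemma G_derive Q : classQ Q -> forall x, is_derive (Gf Q) x (omega_integrand Q x).
Proof.
  intros HQ x. apply (is_derive_RInt (omega_integrand Q) (Gf Q) 0 x).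
  - apply filter_forall. intros b. unfold Gf. apply (@RInt_correct R_CompleteNormedModule), (@ex_RInt_continuous R_CompleteNormedModule).
    intros; apply oi_cont; auto.
  - apply oi_cont; auto.
Qed.

Lemma G_derivable Q : classQ Q -> forall x, derivable_pt_lim (Gf Q) x (omega_integrand Q x).
Proof. intros. apply is_derive_Reals, G_derive; auto. Qed.

Lemma integral_eq Q : classQ Q -> forall r, 0 <= r ->
  integral (omega_integrand Q) 0 r = Gf Q r.
Proof.
  intros HQ r Hr. unfold integral.
  assert (E : exists I, exists pr : Riemann_integrable (omega_integrand Q) 0 r,
                RiemannInt pr = I).
  { exists (RiemannInt (@continuity_implies_RiemannInt (omega_integrand Q) 0 r Hr
       (fun x _ => proj2 (continuity_pt_filterlim _ _) (oi_cont Q HQ x)))).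
    eexists. reflexivity. }
  destruct (epsilon_spec (inhabits 0) _ E) as [pr Hpr].
  rewrite <- Hpr. unfold Gf. rewrite (RInt_Reals _ _ _ pr). reflexivity.
Qed.

Lemma Omega_eq Q : classQ Q -> forall r, 0 <= r -> Omega Q r = exp (- Gf Q r).
Proof. intros. unfold Omega. rewrite integral_eq; auto. Qed.

Lemma gq_pos r q : 0 < r -> 0 < q <= 1 -> 0 < gq r q.
Proof.
  intros. unfold gq. pose proof (Tq_pos r q H H0). apply Rdiv_lt_0_compat; nra.
Qed.

Lemma oi_nonneg Q : classQ Q -> forall s, 0 <= omega_integrand Q s.
Proof.
  intros HQ s. destruct (Rle_dec s 0).
  - unfold omega_integrand. destruct (Rle_dec s 0); lra.
  - rewrite oi_eq by (try lra; apply Q_bounds; auto; lra).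
    apply Rlt_le, gq_pos. lra. apply Q_bounds; auto; lra.
Qed.

Lemma G_nonneg Q : classQ Q -> forall r, 0 <= r -> 0 <= Gf Q r.
Proof.
  intros HQ r Hr. unfold Gf. apply RInt_ge_0; auto.
  apply (@ex_RInt_continuous R_CompleteNormedModule); intros; apply oi_cont; auto.
  intros; apply oi_nonneg; auto.
Qed.

Lemma G0 Q : Gf Q 0 = 0.
Proof. unfold Gf. rewrite RInt_point. reflexivity. Qed.

Lemma Wf_eq Q : classQ Q -> forall x, 0 < x ->
  Wf Q x = exp (- Gf Q x) * (2 - 4 * (x * Q x) /
     (sqrt (x ^ 2 * Q x ^ 2 + 4 - 4 * Q x ^ 2) + x * Q x)).
Proof.
  intros HQ x Hx. pose proof (Q_bounds Q HQ x Hx) as Hq.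
  assert (E : 4 * x / (x + sqrt (x ^ 2 + 4 * Jf Q x)) = x * omega_integrand Q x).
  { unfold omega_integrand. destruct (Rle_dec x 0); [lra|].
    assert (0 <= sqrt (x ^ 2 + 4 * Jf Q x)) by apply sqrt_pos.
    field. lra. }
  unfold Wf. rewrite Omega_eq by (auto; lra). rewrite E, oi_eq by auto.
  unfold gq, Tq. f_equal. f_equal. field.
  pose proof (Tq_pos x (Q x) Hx Hq). unfold Tq in H. nra.
Qed.

Lemma W_derive Q Q' : classQ Q -> (forall r, 0 < r -> derivable_pt_lim Q r (Q' r)) ->
  forall r, 0 < r ->
  derivable_pt_lim (Wf Q) r
    (- exp (- Gf Q r) * (hq r (Q r) + r * Q' r * kq r (Q r))).
Proof.
  intros HQ HD r Hr. apply is_derive_Reals.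
  apply is_derive_ext_loc with (fun x => exp (- Gf Q x) * (2 - 4 * (x * Q x) /
     (sqrt (x ^ 2 * Q x ^ 2 + 4 - 4 * Q x ^ 2) + x * Q x))).
  { apply filter_imp with (fun u => 0 < u). intros u Hu. symmetry. apply Wf_eq; auto.
    now apply locally_pos. }
  pose proof (Q_bounds Q HQ r Hr) as Hq.
  pose proof (Tq_pos r (Q r) Hr Hq) as HT.
  assert (HGd : is_derive (Gf Q) r (omega_integrand Q r)) by (apply G_derive; auto).
  assert (HQd : is_derive Q r (Q' r)) by (apply is_derive_Reals; auto).
  auto_derive.
  - split. exists (omega_integrand Q r). auto.
    split. exists (Q' r). auto.
    split. exists (Q' r). auto.
    split. exists (Q' r). auto.
    split. unfold Tq in HT. 
    replace (r * (r * 1) * (Q r * (Q r * 1)) + 4 + - (4 * (Q r * (Q r * 1))))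
      with (r ^ 2 * Q r ^ 2 + 4 - 4 * Q r ^ 2) by ring.
    apply Rnot_le_lt. intro Hle. 
    assert (Hs: sqrt (r ^ 2 * Q r ^ 2 + 4 - 4 * Q r ^ 2) = 0).
    { apply sqrt_eq_0. nra. pose proof (sqrt_pos (r ^ 2 * Q r ^ 2 + 4 - 4 * Q r ^ 2)). nra. }
    nra.
    split. exists (Q' r). auto.
    split; auto.
    replace (r * (r * 1) * (Q r * (Q r * 1)) + 4 + - (4 * (Q r * (Q r * 1))))
      with (r ^ 2 * Q r ^ 2 + 4 - 4 * Q r ^ 2) by ring.
    fold (Tq r (Q r)). assert (0 < r * Q r) by nra. lra.
  - replace (Derive (fun x => Gf Q x) r) with (omega_integrand Q r) by (symmetry; apply is_derive_unique; exact HGd).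
    replace (Derive (fun x => Q x) r) with (Q' r) by (symmetry; apply is_derive_unique; exact HQd).
    rewrite oi_eq by auto.
    replace (r * (r * 1) * (Q r * (Q r * 1)) + 4 + - (4 * (Q r * (Q r * 1))))
      with (r ^ 2 * Q r ^ 2 + 4 - 4 * Q r ^ 2) by ring.
    fold (Tq r (Q r)). unfold hq, kq, gq.
    pose proof (Tq_sq r (Q r) ltac:(lra)) as E.
    set (T := Tq r (Q r)) in *. set (q := Q r) in *. set (q' := Q' r).
    set (Om := exp (- Gf Q r)).
    assert (E3: T^3 = T*(r ^ 2 * q ^ 2 + 4 - 4 * q ^ 2)) by (rewrite <- E; ring).
    assert (0 < r * q) by nra.
    field_simplify_eq. rewrite E, E3. ring. split; lra.
Qed.

Definition reg (d r q : R) := 0 < q <= 1 /\ (r <= 1 -> d^2 <= 1 - q^2) /\ (1 <= r -> d <= q).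
Definition rho r := Rmax 1 r.

Lemma rho_ge1 r : 1 <= rho r.
Proof. unfold rho. apply Rmax_l. Qed.
Lemma rho_ge r : r <= rho r.
Proof. unfold rho. apply Rmax_r. Qed.
Lemma rho_cases r : (r <= 1 /\ rho r = 1) \/ (1 <= r /\ rho r = r).
Proof. unfold rho. destruct (Rle_dec r 1). left. split; auto. apply Rmax_left; auto.
  right. split. lra. apply Rmax_right. lra. Qed.

Lemma T_lower d r q : 0 < d <= 1 -> 0 < r -> reg d r q -> d * rho r <= Tq r q.
Proof.
  intros Hd Hr (Hq & H1 & H2). pose proof (Tq_nonneg r q).
  destruct (rho_cases r) as [[Hr1 E]|[Hr1 E]]; rewrite E.
  - pose proof (Tq_ge_1mq r q ltac:(lra)). specialize (H1 Hr1).
    assert (d*d <= Tq r q * Tq r q) by nra. nra.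
  - pose proof (Tq_ge_rq r q ltac:(lra) ltac:(lra)). specialize (H2 Hr1). nra.
Qed.

Lemma T_upper r q : 0 < r -> 0 < q <= 1 -> Tq r q <= 3 * rho r.
Proof.
  intros Hr Hq. pose proof (Tq_le r q ltac:(lra) ltac:(lra)).
  pose proof (rho_ge1 r). pose proof (rho_ge r). nra.
Qed.

Lemma T_lip d r q1 q2 : 0 < d <= 1 -> 0 < r -> reg d r q1 -> reg d r q2 ->
  Rabs (Tq r q1 - Tq r q2) <= 5 / d * rho r * Rabs (q1 - q2).
Proof.
  intros Hd Hr R1 R2.
  pose proof (T_lower d r q1 Hd Hr R1). pose proof (T_lower d r q2 Hd Hr R2).
  destruct R1 as (Hq1 & A1 & B1). destruct R2 as (Hq2 & A2 & B2).
  pose proof (Tq_sq r q1 ltac:(lra)). pose proof (Tq_sq r q2 ltac:(lra)).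
  pose proof (Tq_nonneg r q1). pose proof (Tq_nonneg r q2).
  pose proof (Tq_ge_rq r q1 ltac:(lra) ltac:(lra)). pose proof (Tq_ge_rq r q2 ltac:(lra) ltac:(lra)).
  set (T1 := Tq r q1) in *. set (T2 := Tq r q2) in *.
  assert (E : (T1 - T2) * (T1 + T2) = (q1 - q2) * ((q1 + q2) * (r^2 - 4))).
  { replace ((T1 - T2) * (T1 + T2)) with (T1^2 - T2^2) by ring. rewrite H1, H2. ring. }
  assert (EA : Rabs (T1 - T2) * (T1 + T2) = Rabs (q1 - q2) * ((q1 + q2) * Rabs (r^2 - 4))).
  { rewrite <- (Rabs_pos_eq (T1+T2)) by lra. rewrite <- Rabs_mult, E.
    rewrite !Rabs_mult, (Rabs_pos_eq (q1+q2)) by lra. reflexivity. }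
  pose proof (Rabs_pos (T1 - T2)). pose proof (Rabs_pos (q1 - q2)).
  pose proof (rho_ge1 r).
  assert (Hdd : 5 / d * d = 5) by (field; lra).
  destruct (rho_cases r) as [[Hr1 E1]|[Hr1 E1]]; rewrite E1 in *.
  - assert (Rabs (r^2 - 4) <= 4) by (rewrite Rabs_left1; nra).
    assert (Rabs (T1 - T2) * (2 * d) <= 8 * Rabs (q1 - q2)).
    { apply Rle_trans with (Rabs (T1 - T2) * (T1 + T2)). nra.
      rewrite EA. assert (0 <= Rabs (r^2-4)) by apply Rabs_pos.
      assert ((q1 + q2) * Rabs (r^2-4) <= 8) by nra. nra. }
    apply Rmult_le_reg_r with d; [lra|].
    replace (5 / d * 1 * Rabs (q1 - q2) * d) with (5 * Rabs (q1 - q2)) by (field; lra). nra.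
  - specialize (B1 Hr1). specialize (B2 Hr1).
    assert (Rabs (r^2 - 4) <= 5 * r^2) by (apply Rabs_le; nra).
    assert (Rabs (T1 - T2) * (r * (q1+q2)) <= 5 * r^2 * (q1+q2) * Rabs (q1 - q2)).
    { apply Rle_trans with (Rabs (T1 - T2) * (T1 + T2)).
      apply Rmult_le_compat_l; lra.
      rewrite EA. assert (0 <= Rabs (r^2-4)) by apply Rabs_pos.
      assert ((q1 + q2) * Rabs (r^2-4) <= (q1+q2) * (5 * r^2)) by (apply Rmult_le_compat_l; lra). nra. }
    assert (Rabs (T1 - T2) <= 5 * r * Rabs (q1 - q2)).
    { assert (0 < r * (q1 + q2)) by nra.
      apply Rmult_le_reg_r with (r * (q1 + q2)); auto. nra. }
    assert (1 <= 5 / d * d / 5) by (rewrite Hdd; lra).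
    assert (5 <= 5/d) by (unfold Rdiv in *; assert (0 < /d) by (apply Rinv_0_lt_compat; lra); nra).
    nra.
Qed.

Lemma gq_diff_eq r q1 q2 : 0 < r -> 0 < q1 <= 1 -> 0 < q2 <= 1 ->
  gq r q1 - gq r q2 = 16 * (q1 - q2) * (q1 + q2) /
    ((q1 * Tq r q2 + q2 * Tq r q1) * (Tq r q1 + r * q1) * (Tq r q2 + r * q2)).
Proof.
  intros Hr H1 H2. pose proof (Tq_pos r q1 Hr H1). pose proof (Tq_pos r q2 Hr H2).
  pose proof (Tq_sq r q1 ltac:(lra)). pose proof (Tq_sq r q2 ltac:(lra)).
  unfold gq. set (T1 := Tq r q1) in *. set (T2 := Tq r q2) in *.
  assert (0 < r * q1) by nra. assert (0 < r*q2) by nra.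
  assert (0 < q1 * T2 + q2 * T1) by nra.
  assert (K : (q1 * T2 - q2 * T1) * (q1 * T2 + q2 * T1) = 4 * (q1 - q2) * (q1 + q2)).
  { replace ((q1 * T2 - q2 * T1) * (q1 * T2 + q2 * T1)) with (q1^2 * T2^2 - q2^2*T1^2) by ring.
    rewrite H3, H4. ring. }
  assert (0 < (q1 * T2 + q2 * T1) * (T1 + r * q1) * (T2 + r * q2)).
  { apply Rmult_lt_0_compat. apply Rmult_lt_0_compat. all: lra. }
  apply Rmult_eq_reg_r with ((q1 * T2 + q2 * T1) * (T1 + r * q1) * (T2 + r * q2)); [|lra].
  field_simplify; try lra.
Qed.

Lemma gq_diff d r q1 q2 : 0 < d <= 1 -> 0 < r -> reg d r q1 -> reg d r q2 ->
  Rabs (gq r q1 - gq r q2) * rho r ^ 3 <= 16 / d^3 * Rabs (q1 - q2).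
Proof.
  intros Hd Hr R1 R2.
  pose proof (T_lower d r q1 Hd Hr R1). pose proof (T_lower d r q2 Hd Hr R2).
  destruct R1 as (Hq1 & _). destruct R2 as (Hq2 & _).
  rewrite gq_diff_eq by auto.
  set (T1 := Tq r q1) in *. set (T2 := Tq r q2) in *. set (p := rho r) in *.
  pose proof (rho_ge1 r). fold p in H1.
  assert (0 < r*q1) by nra. assert (0 < r*q2) by nra.
  assert (q1*(d*p) <= q1*T2) by (apply Rmult_le_compat_l; lra).
  assert (q2*(d*p) <= q2*T1) by (apply Rmult_le_compat_l; lra).
  assert (L1 : d * p * (q1 + q2) <= q1 * T2 + q2 * T1) by lra.
  assert (L2 : d * p <= T1 + r * q1) by nra.
  assert (L3 : d * p <= T2 + r * q2) by nra.
  assert (0 < d * p) by nra.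
  set (D := (q1 * T2 + q2 * T1) * (T1 + r * q1) * (T2 + r * q2)).
  assert (LD : d * p * (q1 + q2) * (d * p) * (d * p) <= D).
  { unfold D.
    assert (0 <= d*p*(q1+q2)) by nra.
    assert (A1: d*p*(q1+q2)*(d*p) <= (q1*T2+q2*T1)*(T1+r*q1)).
    { apply Rmult_le_compat; lra. }
    apply Rmult_le_compat; try lra. nra. }
  assert (0 < D) by (eapply Rlt_le_trans; [|exact LD]; repeat apply Rmult_lt_0_compat; lra).
  rewrite Rabs_div by lra. rewrite (Rabs_pos_eq D) by lra.
  rewrite Rabs_mult, Rabs_mult, (Rabs_pos_eq 16) by lra. rewrite (Rabs_pos_eq (q1+q2)) by lra.
  pose proof (Rabs_pos (q1 - q2)).
  apply Rmult_le_reg_r with (D * d^3). apply Rmult_lt_0_compat; auto. apply pow_lt; lra.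
  replace (16 * Rabs (q1 - q2) * (q1 + q2) / D * p ^ 3 * (D * d ^ 3))
    with (16 * Rabs (q1 - q2) * ((q1 + q2) * (d * p) ^ 3)) by (field; lra).
  replace (16 / d ^ 3 * Rabs (q1 - q2) * (D * d ^ 3)) with (16 * Rabs (q1 - q2) * D) by (field; lra).
  apply Rmult_le_compat_l. lra.
  eapply Rle_trans; [|exact LD]. right. ring.
Qed.

Definition BL (D x1 x2 M L : R) :=
  Rabs x1 <= M /\ Rabs x2 <= M /\ Rabs (x1 - x2) <= L * D.

Lemma BL_const D c : 0 <= D -> BL D c c (Rabs c) 0.
Proof. intros. split; [lra|split; [lra|]]. rewrite Rminus_diag, Rabs_R0. lra. Qed.

Lemma BL_add D x1 x2 y1 y2 M1 M2 L1 L2 :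
  BL D x1 x2 M1 L1 -> BL D y1 y2 M2 L2 -> BL D (x1+y1) (x2+y2) (M1+M2) (L1+L2).
Proof.
  intros (A1&A2&A3) (B1&B2&B3). repeat split.
  - eapply Rle_trans; [apply Rabs_triang|lra].
  - eapply Rle_trans; [apply Rabs_triang|lra].
  - replace (x1 + y1 - (x2 + y2)) with ((x1 - x2) + (y1 - y2)) by ring.
    eapply Rle_trans; [apply Rabs_triang|lra].
Qed.

Lemma BL_sub D x1 x2 y1 y2 M1 M2 L1 L2 :
  BL D x1 x2 M1 L1 -> BL D y1 y2 M2 L2 -> BL D (x1-y1) (x2-y2) (M1+M2) (L1+L2).
Proof.
  intros (A1&A2&A3) (B1&B2&B3). repeat split.
  - unfold Rminus. eapply Rle_trans; [apply Rabs_triang|]. rewrite Rabs_Ropp. lra.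
  - unfold Rminus. eapply Rle_trans; [apply Rabs_triang|]. rewrite Rabs_Ropp. lra.
  - replace (x1 - y1 - (x2 - y2)) with ((x1 - x2) + - (y1 - y2)) by ring.
    eapply Rle_trans; [apply Rabs_triang|]. rewrite Rabs_Ropp. lra.
Qed.

Lemma BL_mul D x1 x2 y1 y2 M1 M2 L1 L2 :
  BL D x1 x2 M1 L1 -> BL D y1 y2 M2 L2 -> BL D (x1*y1) (x2*y2) (M1*M2) (M1*L2 + M2*L1).
Proof.
  intros (A1&A2&A3) (B1&B2&B3).
  pose proof (Rabs_pos x1). pose proof (Rabs_pos x2).
  pose proof (Rabs_pos y1). pose proof (Rabs_pos y2).
  pose proof (Rabs_pos (x1-x2)). pose proof (Rabs_pos (y1-y2)).
  repeat split.
  - rewrite Rabs_mult. apply Rmult_le_compat; lra.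
  - rewrite Rabs_mult. apply Rmult_le_compat; lra.
  - replace (x1 * y1 - x2 * y2) with (x1 * (y1 - y2) + y2 * (x1 - x2)) by ring.
    eapply Rle_trans; [apply Rabs_triang|]. rewrite !Rabs_mult.
    assert (Rabs x1 * Rabs (y1 - y2) <= M1 * (L2 * D)) by (apply Rmult_le_compat; lra).
    assert (Rabs y2 * Rabs (x1 - x2) <= M2 * (L1 * D)) by (apply Rmult_le_compat; lra).
    lra.
Qed.

Lemma BL_inv D x1 x2 M L m : 0 < m -> m <= x1 -> m <= x2 ->
  BL D x1 x2 M L -> BL D (/x1) (/x2) (/m) (L / (m*m)).
Proof.
  intros Hm H1 H2 (A1&A2&A3).
  assert (/x1 <= /m) by (apply Rinv_le_contravar; lra).
  assert (/x2 <= /m) by (apply Rinv_le_contravar; lra).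
  assert (0 < /x1) by (apply Rinv_0_lt_compat; lra).
  assert (0 < /x2) by (apply Rinv_0_lt_compat; lra).
  repeat split.
  - rewrite Rabs_pos_eq; lra.
  - rewrite Rabs_pos_eq; lra.
  - replace (/x1 - /x2) with ((x2 - x1) / (x1 * x2)) by (field; lra).
    rewrite Rabs_div by nra. rewrite (Rabs_pos_eq (x1*x2)) by nra.
    rewrite <- Rabs_Ropp, Ropp_minus_distr.
    assert (m*m <= x1*x2) by nra.
    apply Rle_trans with (Rabs (x1 - x2) / (m*m)).
    + unfold Rdiv. apply Rmult_le_compat_l. apply Rabs_pos.
      apply Rinv_le_contravar; nra.
    + unfold Rdiv. rewrite Rmult_comm, (Rmult_comm L), Rmult_assoc.
      apply Rmult_le_compat_l. left; apply Rinv_0_lt_compat; nra. lra.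
Qed.

Definition psik t p := 16 * / (t * ((t+p)*(t+p))).
Definition psih t p q := 32*(q*(1-q*q)) * /((t+p)*((t+p)*(t+p)))
   + 16*(q*(1-q*q)) * /(t*((t+p)*(t+p))).

Lemma psi_BL d : 0 < d <= 1 -> exists Mk Lk Mh Lh,
  forall D t1 t2 p1 p2 q1 q2, 0 <= D -> BL D t1 t2 3 (5/d) -> d <= t1 -> d <= t2 ->
    BL D p1 p2 1 1 -> 0 <= p1 -> 0 <= p2 -> BL D q1 q2 1 1 ->
    BL D (psik t1 p1) (psik t2 p2) Mk Lk /\ BL D (psih t1 p1 q1) (psih t2 p2 q2) Mh Lh.
Proof.
  intros Hd. do 4 eexists. intros D t1 t2 p1 p2 q1 q2 HD Ht H1 H2 Hp Hp1 Hp2 Hq.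
  assert (Hm3 : 0 < d * (d * d)) by (repeat apply Rmult_lt_0_compat; lra).
  assert (Hl1 : d * (d * d) <= t1 * ((t1 + p1) * (t1 + p1))).
  { apply Rmult_le_compat; try nra. }
  assert (Hl2 : d * (d * d) <= t2 * ((t2 + p2) * (t2 + p2))).
  { apply Rmult_le_compat; try nra. }
  assert (Hl3 : d * (d * d) <= (t1 + p1) * ((t1 + p1) * (t1 + p1))).
  { apply Rmult_le_compat; try nra. }
  assert (Hl4 : d * (d * d) <= (t2 + p2) * ((t2 + p2) * (t2 + p2))).
  { apply Rmult_le_compat; try nra. }
  assert (Htp : BL D (t1 + p1) (t2 + p2) (3 + 1) (5/d + 1)) by (apply BL_add; auto).
  assert (Hqq : BL D (q1 * (1 - q1 * q1)) (q2 * (1 - q2 * q2)) (1 * (Rabs 1 + 1 * 1)) (1 * (0 + (1 * 1 + 1 * 1)) + (Rabs 1 + 1 * 1) * 1)).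
  { apply BL_mul; auto. apply BL_sub. apply BL_const; auto. apply BL_mul; eauto. }
  eassert (Hd1 : BL D (/ (t1 * ((t1 + p1) * (t1 + p1)))) (/ (t2 * ((t2 + p2) * (t2 + p2)))) _ _).
  { eapply (BL_inv D _ _ _ _ (d*(d*d))); auto.
    apply BL_mul; [exact Ht | apply BL_mul; exact Htp]. }
  eassert (Hd2 : BL D (/ ((t1 + p1) * ((t1 + p1) * (t1 + p1)))) (/ ((t2 + p2) * ((t2 + p2) * (t2 + p2)))) _ _).
  { eapply (BL_inv D _ _ _ _ (d*(d*d))); auto.
    apply BL_mul; [exact Htp | apply BL_mul; exact Htp]. }
  split.
  - unfold psik. apply BL_mul. apply BL_const; auto. exact Hd1.
  - unfold psih. apply BL_add.
    + apply BL_mul. apply BL_mul. apply BL_const; auto. exact Hqq. exact Hd2.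
    + apply BL_mul. apply BL_mul. apply BL_const; auto. exact Hqq. exact Hd1.
Qed.

Lemma rho_pos r : 0 < rho r.
Proof. pose proof (rho_ge1 r). lra. Qed.

Lemma norm_facts d r q1 q2 : 0 < d <= 1 -> 0 < r -> reg d r q1 -> reg d r q2 ->
  let D := Rabs (q1 - q2) in
  BL D (Tq r q1 / rho r) (Tq r q2 / rho r) 3 (5/d) /\
  d <= Tq r q1 / rho r /\ d <= Tq r q2 / rho r /\
  BL D (r * q1 / rho r) (r * q2 / rho r) 1 1 /\
  0 <= r * q1 / rho r /\ 0 <= r * q2 / rho r /\ BL D q1 q2 1 1.
Proof.
  intros Hd Hr R1 R2 D.
  pose proof (rho_pos r) as Hp. pose proof (rho_ge r). pose proof (rho_ge1 r).
  pose proof (T_lower d r q1 Hd Hr R1) as TL1. pose proof (T_lower d r q2 Hd Hr R2) as TL2.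
  pose proof (T_lip d r q1 q2 Hd Hr R1 R2) as TLip.
  destruct R1 as (Hq1 & _). destruct R2 as (Hq2 & _).
  pose proof (T_upper r q1 Hr Hq1) as TU1. pose proof (T_upper r q2 Hr Hq2) as TU2.
  pose proof (Tq_nonneg r q1). pose proof (Tq_nonneg r q2).
  assert (HD : 0 <= D) by apply Rabs_pos.
  assert (Hrq : forall q, 0 < q <= 1 -> 0 <= r * q / rho r <= 1).
  { intros q Hq. split. apply Rdiv_le_0_compat; nra.
    apply Rmult_le_reg_r with (rho r); auto. unfold Rdiv. rewrite Rmult_assoc, Rinv_l by lra. nra. }
  pose proof (Hrq q1 Hq1). pose proof (Hrq q2 Hq2).
  assert (Htl : forall q, d * rho r <= Tq r q -> d <= Tq r q / rho r).
  { intros q Hq. apply Rmult_le_reg_r with (rho r); auto. unfold Rdiv. rewrite Rmult_assoc, Rinv_l by lra. lra. }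
  assert (Htu : forall q, Tq r q <= 3 * rho r -> Tq r q / rho r <= 3).
  { intros q Hq. apply Rmult_le_reg_r with (rho r); auto. unfold Rdiv. rewrite Rmult_assoc, Rinv_l by lra. lra. }
  pose proof (Htl q1 TL1). pose proof (Htl q2 TL2). pose proof (Htu q1 TU1). pose proof (Htu q2 TU2).
  assert (0 < d) by lra.
  repeat split; try (rewrite Rabs_pos_eq; lra); try lra.
  - replace (Tq r q1 / rho r - Tq r q2 / rho r) with ((Tq r q1 - Tq r q2) / rho r) by (field; lra).
  rewrite Rabs_div by lra. rewrite (Rabs_pos_eq (rho r)) by lra.
  apply Rmult_le_reg_r with (rho r); auto. unfold Rdiv. rewrite Rmult_assoc, Rinv_l by lra.
  fold D in TLip. unfold Rdiv in TLip. nra.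
  - replace (r * q1 / rho r - r * q2 / rho r) with ((r / rho r) * (q1 - q2)) by (field; lra).
    rewrite Rabs_mult, (Rabs_pos_eq (r / rho r)) by (apply Rdiv_le_0_compat; lra).
    fold D. assert (r / rho r <= 1).
    { apply Rmult_le_reg_r with (rho r); auto. unfold Rdiv. rewrite Rmult_assoc, Rinv_l by lra. lra. }
    nra.
  - fold D. lra.
Qed.

Lemma kq_norm r q : 0 < r -> 0 < q <= 1 ->
  kq r q = psik (Tq r q / rho r) (r * q / rho r) / rho r ^ 3.
Proof.
  intros Hr Hq. pose proof (Tq_pos r q Hr Hq). pose proof (rho_pos r).
  assert (0 < r*q) by nra.
  unfold kq, psik. field. repeat split; try lra.
Qed.

Lemma hq_norm r q : 0 < r -> 0 < q <= 1 ->
  hq r q = psih (Tq r q / rho r) (r * q / rho r) q / rho r ^ 3.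
Proof.
  intros Hr Hq. pose proof (Tq_pos r q Hr Hq). pose proof (rho_pos r).
  assert (0 < r*q) by nra.
  unfold hq, psih. field. repeat split; try lra.
Qed.

Lemma hk_bounds d : 0 < d <= 1 -> exists Mk Lk Mh Lh,
  forall r q1 q2, 0 < r -> reg d r q1 -> reg d r q2 ->
   Rabs (kq r q1) * rho r ^ 3 <= Mk /\ Rabs (kq r q2) * rho r ^ 3 <= Mk /\
   Rabs (kq r q1 - kq r q2) * rho r ^ 3 <= Lk * Rabs (q1 - q2) /\
   Rabs (hq r q1) * rho r ^ 3 <= Mh /\ Rabs (hq r q2) * rho r ^ 3 <= Mh /\
   Rabs (hq r q1 - hq r q2) * rho r ^ 3 <= Lh * Rabs (q1 - q2).
Proof.
  intros Hd. destruct (psi_BL d Hd) as (Mk & Lk & Mh & Lh & HB).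
  exists Mk, Lk, Mh, Lh. intros r q1 q2 Hr R1 R2.
  destruct (norm_facts d r q1 q2 Hd Hr R1 R2) as (A1 & A2 & A3 & A4 & A5 & A6 & A7).
  destruct (HB _ _ _ _ _ _ _ (Rabs_pos _) A1 A2 A3 A4 A5 A6 A7) as [(K1&K2&K3) (H1&H2&H3)].
  pose proof (rho_pos r). assert (0 < rho r ^ 3) by (apply pow_lt; lra).
  destruct R1 as (Hq1 & _). destruct R2 as (Hq2 & _).
  assert (E : forall x, Rabs (x / rho r ^ 3) * rho r ^ 3 = Rabs x).
  { intros x. rewrite Rabs_div by lra. rewrite (Rabs_pos_eq (rho r ^ 3)) by lra. field. lra. }
  rewrite !kq_norm, !hq_norm by auto.
  unfold Rminus. rewrite <- !Rdiv_opp_l, <- !Rdiv_plus_distr. rewrite !E.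
  fold (Rminus (psik (Tq r q1 / rho r) (r * q1 / rho r)) (psik (Tq r q2 / rho r) (r * q2 / rho r))).
  fold (Rminus (psih (Tq r q1 / rho r) (r * q1 / rho r) q1) (psih (Tq r q2 / rho r) (r * q2 / rho r) q2)).
  repeat split; auto.
Qed.

Lemma B_eq r q : 0 < r -> 0 < q <= 1 -> 2 - r * gq r q = 8 * (1 - q^2) / (Tq r q + r * q)^2.
Proof.
  intros Hr Hq. pose proof (Tq_pos r q Hr Hq). pose proof (Tq_sq r q ltac:(lra)).
  assert (0 < r*q) by nra. unfold gq.
  apply Rmult_eq_reg_r with ((Tq r q + r*q)^2). 2: { apply Rgt_not_eq. apply pow_lt. lra. }
  field_simplify; try lra.
Qed.

Lemma B_bound d r q : 0 < d <= 1 -> 0 < r -> reg d r q ->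
  0 <= 2 - r * gq r q /\ (2 - r * gq r q) * (1 + r^2) <= 16 / d^2.
Proof.
  intros Hd Hr R. pose proof (T_lower d r q Hd Hr R). destruct R as (Hq & _).
  rewrite B_eq by auto. pose proof (rho_ge r). pose proof (rho_ge1 r).
  set (p := rho r) in *. set (T := Tq r q) in *.
  assert (0 < r*q) by nra.
  assert (L : d * p <= T + r * q) by lra.
  assert (0 < (T + r*q)^2) by (apply pow_lt; nra).
  assert (0 <= 1 - q^2) by nra.
  split. apply Rdiv_le_0_compat; lra.
  assert (HL : (d*p)^2 <= (T + r*q)^2) by (apply pow_incr; split; nra).
  assert (0 < d^2) by (apply pow_lt; lra).
  set (X := (T + r*q)^2) in *.
  set (A := 8 * (1 - q ^ 2) / X).
  assert (HA : A * X = 8 * (1 - q^2)) by (unfold A; field; lra).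
  assert (HA0 : 0 <= A) by (unfold A; apply Rdiv_le_0_compat; lra).
  assert (A * (d^2 * p^2) <= 8) by (replace ((d*p)^2) with (d^2*p^2) in HL by ring; nra).
  assert (A * (1 + r^2) <= A * (2 * p^2)) by (apply Rmult_le_compat_l; nra).
  apply Rle_trans with (A * (2 * p^2)). lra.
  apply Rmult_le_reg_r with (d^2). auto.
  replace (16 / d^2 * d^2) with 16 by (field; lra). nra.
Qed.

Lemma exp_le a b : a <= b -> exp a <= exp b.
Proof. intros H. destruct (Rle_lt_or_eq_dec a b H). left; apply exp_increasing; auto. subst; lra. Qed.

Lemma Q_reg Q d : classQ Q -> 0 < d -> d <= Q 1 -> Q 1 <= sqrt (1 - d^2) ->
  forall r, 0 < r -> reg d r (Q r).
Proof.
  intros HQ Hd H1 H2 r Hr. pose proof (Q_bounds Q HQ r Hr) as Hq.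
  pose proof (Q_bounds Q HQ 1 ltac:(lra)) as Hq1.
  assert (Hnn : 0 <= 1 - d^2).
  { destruct (Rle_dec 0 (1 - d^2)); auto. rewrite sqrt_neg_0 in H2 by lra. lra. }
  split; auto. split.
  - intros Hr1. assert (Q r <= Q 1) by (apply Q_le; auto).
    assert (Q r <= sqrt (1 - d^2)) by lra.
    assert (HH : Q r ^ 2 <= sqrt (1 - d^2) ^ 2) by (apply pow_incr; lra).
    rewrite pow2_sqrt in HH by lra. lra.
  - intros Hr1. assert (Q 1 <= Q r) by (apply Q_le; auto; lra). lra.
Qed.

Lemma gq_lower d x q : 0 < d <= 1 -> 1 <= x -> d <= q <= 1 -> 2 <= gq x q * (x + / d).
Proof.
  intros Hd Hx Hq. pose proof (Tq_le x q ltac:(lra) ltac:(lra)).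
  pose proof (Tq_pos x q ltac:(lra) ltac:(lra)).
  assert (0 < x*q) by nra.
  assert (Hc : q * / d >= 1).
  { assert (d * /d = 1) by (field; lra). assert (0 < /d) by (apply Rinv_0_lt_compat; lra). nra. }
  unfold gq. set (T := Tq x q) in *.
  apply Rmult_le_reg_r with (T + x*q). lra.
  replace (4 * q / (T + x * q) * (x + / d) * (T + x * q)) with (4*q*(x + /d)) by (field; lra).
  nra.
Qed.

Lemma Omega_decay Q d : classQ Q -> 0 < d <= 1 -> (forall r, 0 < r -> reg d r (Q r)) ->
  forall r, 0 < r -> exp (- Gf Q r) * (1 + r^2) <= (1 + / d)^2.
Proof.
  intros HQ Hd HR r Hr.
  set (c := / d).
  assert (Hc : 1 <= c).
  { unfold c. replace 1 with (/1) by field. apply Rinv_le_contravar; lra. }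
  assert (HE : forall x, 0 <= x -> exp (- Gf Q x) <= 1).
  { intros x Hx. pose proof (G_nonneg Q HQ x Hx). rewrite <- exp_0. apply exp_le. lra. }
  pose proof (exp_pos (- Gf Q r)).
  destruct (Rle_dec r 1) as [Hr1|Hr1].
  - pose proof (HE r ltac:(lra)).
    apply Rle_trans with (1 * 2). apply Rmult_le_compat; nra. nra.
  - set (phi := fun x => exp (- Gf Q x) * (x + c)^2).
    set (phi' := fun x => exp (- Gf Q x) * (2 * (x + c) - omega_integrand Q x * (x + c)^2)).
    assert (HD : forall x, derivable_pt_lim phi x (phi' x)).
    { intros x. apply is_derive_Reals. unfold phi, phi'.
      assert (HGd : is_derive (Gf Q) x (omega_integrand Q x)) by (apply G_derive; auto).
      auto_derive. exists (omega_integrand Q x). exact HGd.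
      replace (Derive (fun x => Gf Q x) x) with (omega_integrand Q x)
        by (symmetry; apply is_derive_unique; exact HGd). ring. }
    destruct (MVT_cor2 phi phi' 1 r ltac:(lra) (fun c _ => HD c)) as (xi & Hxi & Hxi2).
    assert (Hneg : phi' xi <= 0).
    { unfold phi'. pose proof (exp_pos (- Gf Q xi)).
      rewrite oi_eq by (try lra; apply Q_bounds; auto; lra).
      destruct (HR xi ltac:(lra)) as (Hq & _ & Hq2).
      pose proof (gq_lower d xi (Q xi) Hd ltac:(lra) ltac:(split; [apply Hq2; lra| lra])).
      fold c in H1.
      assert (0 < xi + c) by lra.
      assert (2 * (xi + c) - gq xi (Q xi) * (xi + c) ^ 2 <= 0) by nra.
      nra. }
    assert (phi r <= phi 1) by nra.
    unfold phi in H0. pose proof (HE 1 ltac:(lra)).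
    assert (exp (- Gf Q 1) * (1 + c) ^ 2 <= (1 + c)^2) by (pose proof (pow2_ge_0 (1+c)); nra).
    assert (1 + r^2 <= (r + c)^2) by nra.
    apply Rle_trans with (exp (- Gf Q r) * (r + c) ^ 2). apply Rmult_le_compat_l; lra. lra.
Qed.

Lemma G_diff Q1 Q2 d Linf : classQ Q1 -> classQ Q2 -> 0 < d <= 1 ->
  (forall r, 0 < r -> reg d r (Q1 r)) -> (forall r, 0 < r -> reg d r (Q2 r)) ->
  (forall r, 0 < r -> Rabs (Q1 r - Q2 r) <= Linf) ->
  forall r, 0 <= r -> Rabs (Gf Q1 r - Gf Q2 r) <= 64 / d^3 * Linf.
Proof.
  intros HQ1 HQ2 Hd HR1 HR2 HL r Hr.
  assert (HL0 : 0 <= Linf) by (eapply Rle_trans; [apply Rabs_pos|apply (HL 1); lra]).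
  assert (Hd3 : 0 < d^3) by (apply pow_lt; lra).
  set (K := 32 / d^3 * Linf).
  assert (HK : 0 <= K) by (unfold K; apply Rmult_le_pos; [apply Rlt_le, Rdiv_lt_0_compat; lra| lra]).
  assert (Hpt : forall s, 0 < s ->
     Rabs (omega_integrand Q1 s - omega_integrand Q2 s) <= K / (1 + s^2)).
  { intros s Hs. rewrite !oi_eq by (try lra; apply Q_bounds; auto).
    pose proof (gq_diff d s (Q1 s) (Q2 s) Hd Hs (HR1 s Hs) (HR2 s Hs)).
    pose proof (HL s Hs). pose proof (rho_ge s). pose proof (rho_ge1 s).
    set (p := rho s) in *.
    assert (H3 : 1 + s^2 <= 2 * p^3) by nra.
    assert (16 / d^3 * Rabs (Q1 s - Q2 s) <= 16 / d^3 * Linf).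
    { apply Rmult_le_compat_l; auto. apply Rlt_le, Rdiv_lt_0_compat; lra. }
    set (X := Rabs (gq s (Q1 s) - gq s (Q2 s))) in *.
    assert (0 <= X) by apply Rabs_pos.
    apply Rmult_le_reg_r with (1 + s^2). nra.
    replace (K / (1 + s ^ 2) * (1 + s ^ 2)) with K by (field; nra).
    unfold K. replace (32 / d ^ 3 * Linf) with (2 * (16 / d^3 * Linf)) by (field; lra).
    assert (X * (1 + s^2) <= X * (2 * p^3)) by (apply Rmult_le_compat_l; lra).
    nra. }
  destruct (Req_dec r 0) as [E|Hr0].
  { subst r. rewrite !G0. rewrite Rminus_diag, Rabs_R0. apply Rmult_le_pos; auto.
    apply Rlt_le, Rdiv_lt_0_compat; lra. }
  assert (Hat : atan r < 2) by (pose proof (atan_bound r); pose proof PI_4; lra).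
  assert (HG1 := G_derive Q1 HQ1). assert (HG2 := G_derive Q2 HQ2).
  assert (Hside : forall sg : R, sg * sg = 1 ->
    sg * (Gf Q1 r - Gf Q2 r) <= 2 * K).
  { intros sg Hsg.
    set (f := fun x => sg * (Gf Q1 x - Gf Q2 x) - K * atan x).
    set (f' := fun x => sg * (omega_integrand Q1 x - omega_integrand Q2 x) - K * / (1 + x^2)).
    assert (HD : forall x, derivable_pt_lim f x (f' x)).
    { intros x. apply is_derive_Reals. unfold f, f'.
      apply (is_derive_minus (fun x => sg * (Gf Q1 x - Gf Q2 x)) (fun x => K * atan x)).
      apply (is_derive_scal (fun x => Gf Q1 x - Gf Q2 x)).
      apply (is_derive_minus (Gf Q1) (Gf Q2)); auto.
      replace (K * / (1 + x^2)) with (K * / (1 + x²)) by (unfold Rsqr; f_equal; f_equal; ring).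
      apply (is_derive_scal atan). apply is_derive_atan. }
    assert (Hr' : 0 < r) by lra.
    destruct (MVT_cor2 f f' 0 r Hr' (fun c _ => HD c)) as (xi & Hxi & Hxi2).
    assert (f' xi <= 0).
    { unfold f'. pose proof (Hpt xi ltac:(lra)).
      assert (sg * (omega_integrand Q1 xi - omega_integrand Q2 xi) <=
              Rabs (omega_integrand Q1 xi - omega_integrand Q2 xi)).
      { apply Rle_trans with (Rabs (sg * (omega_integrand Q1 xi - omega_integrand Q2 xi))).
        apply Rle_abs. rewrite Rabs_mult.
        assert (Hab : Rabs sg = 1).
        { assert (Rabs sg * Rabs sg = 1) by (rewrite <- Rabs_mult, Hsg; apply Rabs_R1).
          pose proof (Rabs_pos sg). nra. }
        rewrite Hab. lra. }
      unfold Rdiv in *. lra. }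
    assert (f r <= f 0) by nra.
    unfold f in H0. rewrite !G0, atan_0 in H0.
    assert (K * atan r <= 2 * K) by nra. lra. }
  assert (Hs1 : 1 * 1 = 1) by ring. assert (Hs2 : -1 * -1 = 1) by ring.
  pose proof (Hside 1 Hs1). pose proof (Hside (-1) Hs2).
  unfold K in *. apply Rabs_le. split.
  - replace (64 / d^3 * Linf) with (2 * (32 / d ^ 3 * Linf)) by (field; lra). lra.
  - replace (64 / d^3 * Linf) with (2 * (32 / d ^ 3 * Linf)) by (field; lra). lra.
Qed.

Lemma exp_diff a b : Rabs (exp (- a) - exp (- b)) <= Rmax (exp (- a)) (exp (- b)) * Rabs (a - b).
Proof.
  assert (K : forall a b, a <= b -> Rabs (exp (- a) - exp (- b)) <= exp (- a) * (b - a)).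
  { intros x y Hxy. replace (exp (- y)) with (exp (- x) * exp (- (y - x)))
      by (rewrite <- exp_plus; f_equal; ring).
    pose proof (exp_ineq1_le (- (y - x))). pose proof (exp_pos (-x)).
    assert (exp (- (y - x)) <= 1) by (rewrite <- exp_0; apply exp_le; lra).
    rewrite Rabs_pos_eq by nra. nra. }
  destruct (Rle_dec a b).
  - eapply Rle_trans. apply K; auto. rewrite Rabs_minus_sym, Rabs_pos_eq by lra.
    apply Rmult_le_compat_r. lra. apply Rmax_l.
  - rewrite Rabs_minus_sym. eapply Rle_trans. apply K; lra. rewrite Rabs_pos_eq by lra.
    apply Rmult_le_compat_r. lra. apply Rmax_r.
Qed.

Lemma Wf_eq2 Q r : classQ Q -> 0 < r -> Wf Q r = exp (- Gf Q r) * (2 - r * gq r (Q r)).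
Proof.
  intros HQ Hr. rewrite Wf_eq by auto. pose proof (Q_bounds Q HQ r Hr).
  pose proof (Tq_pos r (Q r) Hr H). assert (0 < r * Q r) by nra.
  unfold gq, Tq in *. f_equal. f_equal. field. lra.
Qed.

Lemma ub_of_lub (f : R -> R) s : sup_pos f s -> forall r, 0 < r -> f r <= s.
Proof. intros [Hub _] r Hr. apply Hub. exists r. auto. Qed.

Lemma deriv_minus Q1 Q2 Q1' Q2' r :
  derivable_pt_lim Q1 r Q1' -> derivable_pt_lim Q2 r Q2' ->
  deriv (fun x => Q1 x - Q2 x) r = Q1' - Q2'.
Proof.
  intros H1 H2. apply deriv_eq. apply is_derive_Reals.
  apply (is_derive_minus Q1 Q2); apply is_derive_Reals; auto.
Qed.

Lemma pow_facts r : 0 < r ->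
  1 + r^4 <= (1 + r^2)^2 /\ r * (1 + r^4) <= 2 * ((1 + r^2) * rho r ^ 3) /\
  1 + r^5 <= 2 * ((1 + r^2) * rho r ^ 3).
Proof.
  intros Hr. split. nra.
  destruct (rho_cases r) as [[H E]|[H E]]; rewrite E.
  - assert (r^2 <= 1) by nra. assert (0 <= r^2) by nra.
    assert (r^4 <= 1) by (replace (r^4) with (r^2*r^2) by ring; nra).
    assert (0 <= r^4) by (replace (r^4) with (r^2*r^2) by ring; nra).
    assert (r^5 <= 1) by (replace (r^5) with (r*r^4) by ring; nra).
    replace (1^3) with 1 by ring. split; nra.
  - assert (1 <= r^2) by nra.
    assert (1 <= r^2 * r^2) by nra.
    assert (r <= r^5) by (replace (r^5) with (r * (r^2 * r^2)) by ring; nra).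
    assert (1 <= r^5) by lra.
    replace (r * (1 + r^4)) with (r + r^5) by ring.
    replace ((1 + r ^ 2) * r ^ 3) with (r^3 + r^5) by ring.
    assert (0 <= r^3) by (apply pow_le; lra). split; nra.
Qed.

Lemma mul_le a b A B : 0 <= a -> 0 <= b -> a <= A -> b <= B -> a * b <= A * B.
Proof. intros. apply Rmult_le_compat; auto. Qed.

Theorem lemma6p3 :
  forall delta : R, 0 < delta ->
  exists C : R, 0 < C /\
  forall (Q1 Q2 : R -> R) (Linf N12 N2 : R),
    classQ Q1 -> classQ Q2 ->
    delta <= Rmin (Q1 1) (Q2 1) ->
    Rmax (Q1 1) (Q2 1) <= sqrt (1 - delta ^ 2) ->
    sup_pos (fun r => Rabs (Q1 r - Q2 r)) Linf ->
    sup_pos (fun r => r * Rabs (deriv (fun x => Q1 x - Q2 x) r)) N12 ->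
    sup_pos (fun r => r * Rabs (deriv Q2 r)) N2 ->
    (forall r, 0 < r ->
       (1 + r ^ 4) * Rabs (Wf Q1 r - Wf Q2 r) <= C * Linf) /\
    (forall r, 0 < r ->
       (1 + r ^ 5) * Rabs (deriv (Wf Q1) r - deriv (Wf Q2) r)
         <= C * N12 + C * (1 + N2) * Linf).
Proof.
  intros delta Hd.
  destruct (Rle_dec delta 1) as [Hd1|Hd1].
  2: { exists 1. split; [lra|]. intros Q1 Q2 Linf N12 N2 HQ1 HQ2 Hmin.
       exfalso. pose proof (Q_bounds Q1 HQ1 1 ltac:(lra)). pose proof (Rmin_l (Q1 1) (Q2 1)). lra. }
  assert (Hd' : 0 < delta <= 1) by lra.
  destruct (hk_bounds delta Hd') as (Mk & Lk & Mh & Lh & HB).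
  set (KO := (1 + / delta)^2).
  set (A5 := 64 / delta^3).
  set (Mk' := Rabs Mk). set (Lk' := Rabs Lk). set (Mh' := Rabs Mh). set (Lh' := Rabs Lh).
  assert (HMk : 0 <= Mk') by apply Rabs_pos. assert (HLk : 0 <= Lk') by apply Rabs_pos.
  assert (HMh : 0 <= Mh') by apply Rabs_pos. assert (HLh : 0 <= Lh') by apply Rabs_pos.
  assert (Hid : 0 < / delta) by (apply Rinv_0_lt_compat; lra).
  assert (HKO : 1 <= KO) by (unfold KO; nra).
  assert (Hd2 : 0 < delta^2) by (apply pow_lt; lra).
  assert (Hd3 : 0 < delta^3) by (apply pow_lt; lra).
  assert (HA5 : 0 < A5) by (unfold A5; apply Rdiv_lt_0_compat; lra).
  assert (H16 : 0 < 16 * A5 / delta^2) by (apply Rdiv_lt_0_compat; lra).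
  assert (H32 : 0 < 32 / delta^3) by (apply Rdiv_lt_0_compat; lra).
  set (S := Mk' + A5 * (Mh' + Mk') + Lh' + Lk' + 16 * A5 / delta^2 + 32 / delta^3).
  assert (HS : 0 <= S) by (unfold S; assert (0 <= A5 * (Mh' + Mk')) by nra; lra).
  set (C := 2 * KO * S + 1).
  exists C. split. unfold C. nra.
  intros Q1 Q2 Linf N12 N2 HQ1 HQ2 Hmin Hmax HL HN12 HN2.
  pose proof (Rmin_l (Q1 1) (Q2 1)). pose proof (Rmin_r (Q1 1) (Q2 1)).
  pose proof (Rmax_l (Q1 1) (Q2 1)). pose proof (Rmax_r (Q1 1) (Q2 1)).
  pose proof (Q_reg Q1 delta HQ1 Hd ltac:(lra) ltac:(lra)) as R1.
  pose proof (Q_reg Q2 delta HQ2 Hd ltac:(lra) ltac:(lra)) as R2.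
  pose proof HQ1 as (Q1' & HD1 & _ & _ & HQ1p & _).
  pose proof HQ2 as (Q2' & HD2 & _ & _ & HQ2p & _).
  pose proof (ub_of_lub _ _ HL) as HLr. simpl in HLr.
  pose proof (ub_of_lub _ _ HN12) as HN12r. simpl in HN12r.
  pose proof (ub_of_lub _ _ HN2) as HN2r. simpl in HN2r.
  assert (HL0 : 0 <= Linf) by (eapply Rle_trans; [apply Rabs_pos|apply (HLr 1); lra]).
  assert (HN120 : 0 <= N12).
  { eapply Rle_trans; [|apply (HN12r 1); lra]. rewrite Rmult_1_l. apply Rabs_pos. }
  assert (HN20 : 0 <= N2).
  { eapply Rle_trans; [|apply (HN2r 1); lra]. rewrite Rmult_1_l. apply Rabs_pos. }
  pose proof (Omega_decay Q1 delta HQ1 Hd' R1) as HO1.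
  pose proof (Omega_decay Q2 delta HQ2 Hd' R2) as HO2.
  pose proof (G_diff Q1 Q2 delta Linf HQ1 HQ2 Hd' R1 R2 HLr) as HGd.
  assert (HX : forall r, 0 < r ->
    Rabs (exp (- Gf Q1 r) - exp (- Gf Q2 r)) * (1 + r^2) <= KO * (A5 * Linf)).
  { intros r Hr. pose proof (exp_diff (Gf Q1 r) (Gf Q2 r)).
    pose proof (HGd r ltac:(lra)). fold A5 in H4.
    assert (Rmax (exp (- Gf Q1 r)) (exp (- Gf Q2 r)) * (1 + r^2) <= KO).
    { unfold Rmax. destruct (Rle_dec _ _); [apply HO2|apply HO1]; auto. }
    assert (0 <= Rmax (exp (- Gf Q1 r)) (exp (- Gf Q2 r))).
    { eapply Rle_trans; [|apply Rmax_l]. left; apply exp_pos. }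
    pose proof (Rabs_pos (Gf Q1 r - Gf Q2 r)).
    assert (0 < 1 + r^2) by nra.
    apply Rle_trans with (Rmax (exp (- Gf Q1 r)) (exp (- Gf Q2 r)) * Rabs (Gf Q1 r - Gf Q2 r) * (1 + r^2)).
    apply Rmult_le_compat_r; lra.
    replace (Rmax (exp (- Gf Q1 r)) (exp (- Gf Q2 r)) * Rabs (Gf Q1 r - Gf Q2 r) * (1 + r ^ 2))
      with ((Rmax (exp (- Gf Q1 r)) (exp (- Gf Q2 r)) * (1 + r^2)) * Rabs (Gf Q1 r - Gf Q2 r)) by ring.
    apply mul_le; nra. }
  split; intros r Hr.
  - pose proof (R1 r Hr) as Rq1. pose proof (R2 r Hr) as Rq2.
    rewrite !Wf_eq2 by auto.
    pose proof (HX r Hr) as HXr. pose proof (HO2 r Hr) as HO2r. fold KO in HO2r.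
    pose proof (exp_pos (- Gf Q2 r)) as HO2p.
    destruct (B_bound delta r (Q1 r) Hd' Hr Rq1) as [HB0 HB1].
    pose proof (gq_diff delta r (Q1 r) (Q2 r) Hd' Hr Rq1 Rq2) as Hg.
    pose proof (HLr r Hr) as HLq.
    destruct (pow_facts r Hr) as (P4 & P4' & P5).
    pose proof (rho_ge1 r). pose proof (rho_pos r).
    assert (Hp3 : 0 < rho r ^ 3) by (apply pow_lt; lra).
    set (O1 := exp (- Gf Q1 r)) in *. set (O2 := exp (- Gf Q2 r)) in *.
    set (g1 := gq r (Q1 r)) in *. set (g2 := gq r (Q2 r)) in *.
    set (B1 := 2 - r * g1) in *.
    replace (O1 * B1 - O2 * (2 - r * g2)) with ((O1 - O2) * B1 + - (O2 * r * (g1 - g2))) by (unfold B1; ring).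
    set (X := Rabs (O1 - O2)) in *. set (Y := Rabs (g1 - g2)) in *.
    assert (HX0 : 0 <= X) by apply Rabs_pos. assert (HY0 : 0 <= Y) by apply Rabs_pos.
    assert (Habs : Rabs ((O1 - O2) * B1 + - (O2 * r * (g1 - g2))) <= X * B1 + O2 * r * Y).
    { eapply Rle_trans; [apply Rabs_triang|]. rewrite Rabs_Ropp, !Rabs_mult.
      rewrite (Rabs_pos_eq B1), (Rabs_pos_eq O2), (Rabs_pos_eq r) by lra. fold X Y. lra. }
    assert (0 < 1 + r^2) by nra. assert (0 < 1 + r^4) by (pose proof (pow2_ge_0 (r^2)); nra).
    assert (T1 : (1 + r^4) * (X * B1) <= KO * (A5 * Linf) * (16 / delta^2)).
    { apply Rle_trans with ((1 + r^2)^2 * (X * B1)). apply Rmult_le_compat_r; nra.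
      replace ((1 + r ^ 2) ^ 2 * (X * B1)) with ((X * (1 + r^2)) * (B1 * (1 + r^2))) by ring.
      apply mul_le; nra. }
    assert (HYr : Y * rho r ^ 3 <= 16 / delta^3 * Linf).
    { eapply Rle_trans; [exact Hg|]. apply Rmult_le_compat_l; lra. }
    assert (T2 : (1 + r^4) * (O2 * r * Y) <= 2 * (KO * (16 / delta^3 * Linf))).
    { replace ((1 + r^4) * (O2 * r * Y)) with ((O2 * Y) * (r * (1 + r^4))) by ring.
      apply Rle_trans with ((O2 * Y) * (2 * ((1 + r ^ 2) * rho r ^ 3))).
      apply Rmult_le_compat_l; nra.
      replace (O2 * Y * (2 * ((1 + r ^ 2) * rho r ^ 3))) with (2 * ((O2 * (1 + r^2)) * (Y * rho r ^ 3))) by ring.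
      apply Rmult_le_compat_l. lra. apply mul_le; nra. }
    assert (Hfin : KO * (A5 * Linf) * (16 / delta^2) + 2 * (KO * (16 / delta^3 * Linf))
                   = KO * Linf * (16 * A5 / delta^2 + 32 / delta^3)) by (field; lra).
    assert (HSge : 16 * A5 / delta^2 + 32 / delta^3 <= S).
    { unfold S. assert (0 <= A5 * (Mh' + Mk')) by nra. lra. }
    assert (KO * Linf * (16 * A5 / delta^2 + 32 / delta^3) <= C * Linf).
    { unfold C. assert (0 <= KO * Linf) by nra.
      assert (KO * Linf * (16 * A5 / delta^2 + 32 / delta^3) <= KO * Linf * S) by (apply Rmult_le_compat_l; lra).
      nra. }
    apply Rle_trans with ((1 + r^4) * (X * B1 + O2 * r * Y)).
    apply Rmult_le_compat_l; lra. lra.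
  - pose proof (R1 r Hr) as Rq1. pose proof (R2 r Hr) as Rq2.
    rewrite (deriv_eq _ _ _ (W_derive Q1 Q1' HQ1 HD1 r Hr)).
    rewrite (deriv_eq _ _ _ (W_derive Q2 Q2' HQ2 HD2 r Hr)).
    pose proof (HN12r r Hr) as Hn12. rewrite (deriv_minus Q1 Q2 (Q1' r) (Q2' r) r (HD1 r Hr) (HD2 r Hr)) in Hn12.
    pose proof (HN2r r Hr) as Hn2. rewrite (deriv_eq _ _ _ (HD2 r Hr)) in Hn2.
    pose proof (HQ2p r Hr) as Hq2p.
    pose proof (HX r Hr) as HXr. pose proof (HO1 r Hr) as HO1r. fold KO in HO1r.
    pose proof (exp_pos (- Gf Q1 r)) as HO1p.
    pose proof (HLr r Hr) as HLq.
    destruct (HB r (Q1 r) (Q2 r) Hr Rq1 Rq2) as (K1&K2&K3&Hh1&Hh2&Hh3).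
    destruct (pow_facts r Hr) as (P4 & P4' & P5).
    pose proof (rho_ge1 r). pose proof (rho_pos r).
    assert (Hp3 : 0 < rho r ^ 3) by (apply pow_lt; lra).
    set (O1 := exp (- Gf Q1 r)) in *. set (O2 := exp (- Gf Q2 r)) in *.
    set (k1 := kq r (Q1 r)) in *. set (k2 := kq r (Q2 r)) in *.
    set (h1 := hq r (Q1 r)) in *. set (h2 := hq r (Q2 r)) in *.
    set (p1 := r * Q1' r). set (p2 := r * Q2' r).
    set (rho3 := rho r ^ 3) in *.
    set (D := Rabs (Q1 r - Q2 r)) in *.
    assert (HD0 : 0 <= D) by apply Rabs_pos.
    assert (Hp2 : 0 <= p2 <= N2).
    { unfold p2. rewrite Rabs_pos_eq in Hn2 by lra. split; nra. }
    assert (Hp12 : Rabs (p1 - p2) <= N12).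
    { unfold p1, p2. replace (r * Q1' r - r * Q2' r) with (r * (Q1' r - Q2' r)) by ring.
      rewrite Rabs_mult, Rabs_pos_eq by lra. lra. }
    replace (- O1 * (h1 + p1 * k1) - - O2 * (h2 + p2 * k2))
      with (- ((O1 - O2) * (h2 + p2 * k2) + O1 * ((h1 - h2) + (p1 - p2) * k1 + p2 * (k1 - k2))))
      by ring.
    set (X := Rabs (O1 - O2)) in *.
    set (Z2 := Rabs (h2 + p2 * k2)).
    set (Z12 := Rabs ((h1 - h2) + (p1 - p2) * k1 + p2 * (k1 - k2))).
    assert (HX0 : 0 <= X) by apply Rabs_pos.
    assert (HZ20 : 0 <= Z2) by apply Rabs_pos.
    assert (HZ120 : 0 <= Z12) by apply Rabs_pos.
    assert (Habs : Rabs (- ((O1 - O2) * (h2 + p2 * k2) + O1 * ((h1 - h2) + (p1 - p2) * k1 + p2 * (k1 - k2))))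
                   <= X * Z2 + O1 * Z12).
    { rewrite Rabs_Ropp. eapply Rle_trans; [apply Rabs_triang|]. rewrite !Rabs_mult.
      rewrite (Rabs_pos_eq O1) by lra. fold X Z2 Z12. lra. }
    assert (HMk1 : Mk <= Mk') by apply Rle_abs.
    assert (HMh1 : Mh <= Mh') by apply Rle_abs.
    assert (HLkD : Lk * D <= Lk' * Linf).
    { apply Rle_trans with (Lk' * D). apply Rmult_le_compat_r; [lra|apply Rle_abs].
      apply Rmult_le_compat_l; lra. }
    assert (HLhD : Lh * D <= Lh' * Linf).
    { apply Rle_trans with (Lh' * D). apply Rmult_le_compat_r; [lra|apply Rle_abs].
      apply Rmult_le_compat_l; lra. }
    assert (HZ2 : Z2 * rho3 <= Mh' + N2 * Mk').
    { unfold Z2. apply Rle_trans with ((Rabs h2 + p2 * Rabs k2) * rho3).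
      apply Rmult_le_compat_r; [lra|]. eapply Rle_trans; [apply Rabs_triang|].
      rewrite Rabs_mult, (Rabs_pos_eq p2) by lra. lra.
      rewrite Rmult_plus_distr_r, Rmult_assoc.
      assert (p2 * (Rabs k2 * rho3) <= N2 * Mk') by (apply mul_le; try nra; pose proof (Rabs_pos k2); nra).
      lra. }
    assert (HZ12 : Z12 * rho3 <= Lh' * Linf + N12 * Mk' + N2 * (Lk' * Linf)).
    { unfold Z12. apply Rle_trans with ((Rabs (h1 - h2) + Rabs (p1 - p2) * Rabs k1 + p2 * Rabs (k1 - k2)) * rho3).
      apply Rmult_le_compat_r; [lra|].
      eapply Rle_trans; [apply Rabs_triang|]. rewrite (Rabs_mult p2), (Rabs_pos_eq p2) by lra.
      pose proof (Rabs_triang (h1 - h2) ((p1 - p2) * k1)) as Htr. rewrite Rabs_mult in Htr. lra.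
      rewrite !Rmult_plus_distr_r, !Rmult_assoc.
      assert (Rabs (p1 - p2) * (Rabs k1 * rho3) <= N12 * Mk')
        by (apply mul_le; try nra; try apply Rabs_pos; pose proof (Rabs_pos k1); nra).
      assert (p2 * (Rabs (k1 - k2) * rho3) <= N2 * (Lk' * Linf))
        by (apply mul_le; try nra; pose proof (Rabs_pos (k1 - k2)); nra).
      lra. }
    assert (E1 : (1 + r^5) * (X * Z2 + O1 * Z12) <=
                 2 * ((X * (1 + r^2)) * (Z2 * rho3) + (O1 * (1 + r^2)) * (Z12 * rho3))).
    { apply Rle_trans with (2 * ((1 + r ^ 2) * rho3) * (X * Z2 + O1 * Z12)).
      apply Rmult_le_compat_r. nra. exact P5. right; ring. }
    assert (E2 : (X * (1 + r^2)) * (Z2 * rho3) <= (KO * (A5 * Linf)) * (Mh' + N2 * Mk'))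
      by (apply mul_le; nra).
    assert (E3 : (O1 * (1 + r^2)) * (Z12 * rho3) <= KO * (Lh' * Linf + N12 * Mk' + N2 * (Lk' * Linf)))
      by (apply mul_le; nra).
    assert (Hfin : 2 * ((KO * (A5 * Linf)) * (Mh' + N2 * Mk') + KO * (Lh' * Linf + N12 * Mk' + N2 * (Lk' * Linf)))
                   <= C * N12 + C * (1 + N2) * Linf).
    { assert (HC : C = 2 * KO * S + 1) by reflexivity.
      assert (0 <= KO * Linf) by nra. assert (0 <= KO * N12) by nra.
      assert (0 <= KO * N2 * Linf) by nra.
      assert (HS1 : Mk' <= S).
      { unfold S. assert (0 <= A5 * (Mh' + Mk')) by nra. lra. }
      assert (HS2 : A5 * (Mh' + Mk') + Lh' + Lk' <= S) by (unfold S; lra).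
      assert (2 * (KO * N12) * Mk' <= 2 * (KO * N12) * S) by (apply Rmult_le_compat_l; lra).
      assert (2 * (KO * Linf) * (A5 * (Mh' + Mk') + Lh' + Lk') <= 2 * (KO * Linf) * S)
        by (apply Rmult_le_compat_l; lra).
      assert (2 * (KO * N2 * Linf) * (A5 * (Mh' + Mk') + Lh' + Lk') <= 2 * (KO * N2 * Linf) * S)
        by (apply Rmult_le_compat_l; lra).
      assert (0 <= KO * Linf * A5 * Mk') by (repeat apply Rmult_le_pos; lra).
      assert (0 <= KO * N2 * Linf * A5 * Mh') by (repeat apply Rmult_le_pos; lra).
      assert (0 <= KO * N2 * Linf * Lh') by (repeat apply Rmult_le_pos; lra).
      assert (0 <= KO * Linf * Lk') by (repeat apply Rmult_le_pos; lra).
      assert (0 <= N12 + (1 + N2) * Linf) by nra.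
      rewrite HC. nra. }
    apply Rle_trans with ((1 + r^5) * (X * Z2 + O1 * Z12)).
    apply Rmult_le_compat_l. pose proof (pow_le r 5 ltac:(lra)). lra. exact Habs.
    lra.
Qed.
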